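(* Let $p$ be an odd prime and $1\le\ell\le p-1$ with Legendre symbol $\left(\frac{8\ell+1}{p}\right)=-1$. Then for all $n\ge0$, $$b\big(4(pn+\ell)\big)\equiv 0\pmod 8.$$ Furthermore, for every odd prime $p$ and all $n,k\ge0$, $$b(4n)\equiv b\!\left(4p^{2k+2}n+\frac{p^{2k+2}-1}{2}\right)\pmod 8.$$
   Context: The mock theta function $\mathcal{B}(q)=\sum_{n\ge0}\frac{q^n(-q;q^2)_n}{(q;q^2)_{n+1}}=\sum_{n\ge0}b(n)q^n$, where $(a;q)_n=\prod_{j=0}^{n-1}(1-aq^j)$. *)

(* Defs.v *)
From mathcomp Require Import all_boot all_order all_algebra.
Set Implicit Arguments. Unset Strict Implicit. Unset Printing Implicit Defensive.
Import Order.TTheory GRing.Theory Num.Theory.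
Local Open Scope ring_scope.

Definition series := nat -> int.

Definition smul (f g : series) : series :=
  fun m => \sum_(i < m.+1) f i * g (m - i)%N.

Definition sone : series := fun m => ((m == 0)%N : nat)%:Z.

Definition smon (d : nat) : series := fun m => ((m == d) : nat)%:Z.

Definition onePlus (d : nat) : series :=
  fun m => ((m == 0)%N : nat)%:Z + ((m == d) : nat)%:Z.

(* 1 / (1 - q^d) = sum_i q^(d i), for d >= 1 *)
Definition geomInv (d : nat) : series := fun m => ((d %| m)%N : nat)%:Z.

Definition sprod (fs : seq series) : series := foldr smul sone fs.

(* (-q;q^2)_n = prod_{j<n} (1 + q^(2j+1)) *)
Definition pochNeg (n : nat) : series :=
  sprod [seq onePlus (2 * j).+1 | j <- iota 0 n].

(* 1 / (q;q^2)_(n+1) = prod_{j<=n} 1/(1 - q^(2j+1)) *)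
Definition invPoch (n : nat) : series :=
  sprod [seq geomInv (2 * j).+1 | j <- iota 0 n.+1].

(* the n-th summand  q^n (-q;q^2)_n / (q;q^2)_(n+1) *)
Definition Bterm (n : nat) : series :=
  smul (smon n) (smul (pochNeg n) (invPoch n)).

(* b(m) = coefficient of q^m in B(q); the summands with n > m are
   O(q^(m+1)) and thus do not contribute. *)
Definition b (m : nat) : int := \sum_(n < m.+1) Bterm n m.

Definition legendre (a : int) (p : nat) : int :=
  if (p%:Z %| a)%Z then 0
  else if [exists x : 'I_p, (p%:Z %| (x%:Z ^+ 2 - a))%Z] then 1 else -1.

(* Main.v *)
Require Import Defs.
From mathcomp Require Import all_boot all_order all_algebra.
From mathcomp Require Import zify ring.
From Stdlib Require Import Setoid Morphisms.
Set Implicit Arguments. Unset Strict Implicit. Unset Printing Implicit Defensive.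
Import Order.TTheory GRing.Theory Num.Theory.

Definition fS d j := ((d %| j) * (j %/ d).+1)%N.

Lemma four_dvd n k m : k * (2 * n + 1) + 2 * n * n.+1 = 4 * m -> 4 %| k.
Proof.
move=> E.
have h2 : 2 %| n * n.+1.
  by rewrite dvdn2 oddM /=; case: (odd n).
have h4 : 4 %| k * (2 * n + 1).
  have -> : k * (2 * n + 1) = 4 * m - 2 * (n * n.+1) by rewrite -E mulnA addnK.
  apply: dvdn_sub; first exact: dvdn_mulr.
  by rewrite (_ : 4 = 2 * 2) // dvdn_pmul2l.
rewrite Gauss_dvdl // in h4.
by rewrite (_ : 4 = 2 ^ 2) // coprime_pexpl // coprime2n addn1 /= oddM.
Qed.

Lemma arith n m :
  let d := (2 * n + 1)%N in let e := (2 * n * n.+1)%N in let N := (4 * m)%N in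
  exists w, ((if N < e then 0 else fS d (N - e)) +
             (if N < e + 2 * d then 0 else fS d (N - e - 2 * d)))%N = ((N == e) + 8 * w)%N.
Proof.
move=> d e N.
have d0 : 0 < d by rewrite /d addn1.
case: (ltnP N e) => hNe.
  exists 0; rewrite (_ : N < e + 2 * d) ?(ltn_addr _ hNe) //.
  by rewrite (_ : (N == e) = false) //; apply/eqP => E; move: hNe; rewrite E ltnn.
set j := N - e.
case hdj: (d %| j); last first.
  exists 0; rewrite /fS hdj /= mul0n add0n.
  have -> : (N == e) = false.
    apply/eqP => E; move: hdj; rewrite /j E subnn dvdn0 //.
  case: ltnP => // h.
  have -> : d %| N - e - 2 * d = false by rewrite dvdn_subl ?dvdn_mull // /j; lia.
  by [].
move: (hdj); rewrite /j => /dvdnP [k Ek].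
have hk : 4 %| k.
  apply: (@four_dvd n k m); rewrite -/d -/e -Ek subnK //.
case/dvdnP: hk => a Ea.
case: a Ea => [|a] Ea.
  exists 0; move: Ek; rewrite Ea mul0n => Ek.
  have -> : N = e by lia.
  by rewrite subnn /fS dvdn0 div0n eqxx (_ : e < e + 2 * d) //; lia.
exists a.+1.
have hlt : (N < e + 2 * d) = false by apply/negbTE; rewrite -leqNgt; nia.
rewrite hlt (_ : (N == e) = false); last by apply/eqP; nia.
rewrite /fS Ek dvdn_mull ?dvdnn // mulnK //.
rewrite -mulnBl dvdn_mull ?dvdnn // mulnK //; nia.
Qed.

Local Open Scope ring_scope.

Definition eqm (K : nat) (p q : {poly int}) := forall i, (i < K)%N -> p`_i = q`_i.

Lemma eqm_refl K : Reflexive (eqm K). Proof. by move=> p i. Qed.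
Lemma eqm_sym K : Symmetric (eqm K). Proof. by move=> p q H i Hi; rewrite H. Qed.
Lemma eqm_trans K : Transitive (eqm K).
Proof. by move=> p q r H1 H2 i Hi; rewrite H1 // H2. Qed.

Add Parametric Relation K : {poly int} (eqm K)
  reflexivity proved by (@eqm_refl K)
  symmetry proved by (@eqm_sym K)
  transitivity proved by (@eqm_trans K) as eqm_rel.

Add Parametric Morphism K : (@GRing.add {poly int}) with signature
  eqm K ==> eqm K ==> eqm K as eqm_add.
Proof. by move=> p q H r s H' i Hi; rewrite !coefD H // H'. Qed.

Add Parametric Morphism K : (@GRing.opp {poly int}) with signature
  eqm K ==> eqm K as eqm_opp.
Proof. by move=> p q H i Hi; rewrite !coefN H. Qed.

Add Parametric Morphism K : (@GRing.mul {poly int}) with signature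
  eqm K ==> eqm K ==> eqm K as eqm_mul.
Proof.
move=> p q H r s H' i Hi; rewrite !coefM; apply: eq_bigr => j _.
have hj : (j <= i)%N by rewrite -ltnS.
rewrite H ?H' //; [exact: leq_ltn_trans (leq_subr _ _) Hi | exact: leq_ltn_trans hj Hi].
Qed.

Lemma eqm_sum K (I : Type) (r : seq I) (P : pred I) (F G : I -> {poly int}) :
  (forall i, P i -> eqm K (F i) (G i)) ->
  eqm K (\sum_(i <- r | P i) F i) (\sum_(i <- r | P i) G i).
Proof.
move=> H; elim/big_rec2: _ => [|i x y Pi Hxy]; first reflexivity.
by rewrite Hxy H.
Qed.

Lemma eqm_prod K (I : Type) (r : seq I) (P : pred I) (F G : I -> {poly int}) :
  (forall i, P i -> eqm K (F i) (G i)) ->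
  eqm K (\prod_(i <- r | P i) F i) (\prod_(i <- r | P i) G i).
Proof.
move=> H; elim/big_rec2: _ => [|i x y Pi Hxy]; first reflexivity.
by rewrite Hxy H.
Qed.

Lemma eqm_Xn0 K n p : (K <= n)%N -> eqm K ('X^n * p) 0.
Proof.
move=> Hn i Hi; rewrite coefXnM coef0.
by have -> : (i < n)%N by exact: leq_trans Hi Hn.
Qed.

Definition gi K d : {poly int} := \poly_(i < K) (((d %| i)%N : nat)%:Z).

Lemma gi_inv K d : (0 < d)%N -> eqm K (gi K d * (1 - 'X^d)) 1.
Proof.
move=> d0 i Hi; rewrite mulrBr mulr1 coefB coefMXn coef1 !coef_poly Hi.
case: ltnP => hid.
  case: i Hi hid => [|i] Hi hid /=; first by rewrite dvdn0 subr0.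
  by rewrite gtnNdvd // subr0.
rewrite (leq_ltn_trans (leq_subr _ _) Hi).
rewrite (dvdn_subl hid (dvdnn d)).
rewrite subrr; case: i Hi hid => // i; move: d0; case: d => //.
Qed.

Lemma eqm0 p q : eqm 0 p q. Proof. by []. Qed.

Lemma eqm_Xn0r K n p : (K <= n)%N -> eqm K (p * 'X^n) 0.
Proof. by rewrite mulrC; apply: eqm_Xn0. Qed.

Definition hh K a b k : {poly int} :=
  \prod_(j < k) ((1 + 'X^(a + 2 * j)) * gi K (b + 2 * j)).
Definition HH K a b t : {poly int} := \sum_(k < K) hh K a b k * 'X^(t * k).

Lemma hhS K a b k :
  hh K a b k.+1 = ((1 + 'X^a) * gi K b) * hh K (a + 2) (b + 2) k.
Proof.
rewrite /hh big_ord_recl !muln0 !addn0; congr (_ * _).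
by apply: eq_bigr => j _; rewrite /= (_ : bump 0 j = j.+1) // mulnS !addnA.
Qed.

Lemma hhSr K a b k :
  hh K a b k.+1 = hh K a b k * ((1 + 'X^(a + 2 * k)) * gi K (b + 2 * k)).
Proof. by rewrite /hh big_ord_recr. Qed.

Lemma R1 K a b t : (0 < t)%N ->
  eqm K (HH K a b t) (1 + 'X^t * ((1 + 'X^a) * gi K b) * HH K (a + 2) (b + 2) t).
Proof.
move=> t0; case: K => [|K]; first exact: eqm0.
rewrite /HH big_ord_recl (_ : hh _ a b 0 = 1); last by rewrite /hh big_ord0.
rewrite mul1r muln0 expr0.
rewrite [X in _ + X](_ : _ = 'X^t * ((1 + 'X^a) * gi K.+1 b) *
    \sum_(i < K) hh K.+1 (a + 2) (b + 2) i * 'X^(t * i)); last first.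
  rewrite mulr_sumr; apply: eq_bigr => k _.
  rewrite /= (_ : bump 0 k = k.+1) // hhS mulnS exprD; ring.
apply: eqm_add; first reflexivity.
rewrite [\sum_(k < K.+1) _]big_ord_recr /= mulrDr -[X in eqm _ X _]addr0.
apply: eqm_add; first reflexivity.
apply: eqm_sym.
set c := ((1 + 'X^a) * gi K.+1 b).
rewrite (_ : 'X^t * c * (hh K.+1 (a + 2) (b + 2) K * 'X^(t * K)) = 'X^(t * K.+1) * (c * hh K.+1 (a + 2) (b + 2) K)); last by rewrite mulnS (exprD _ t (t * K)); ring.
by apply: eqm_Xn0; nia.
Qed.

Lemma eqm_eq K p q : p = q -> eqm K p q. Proof. by move=> ->. Qed.

Lemma R2 K a c t : (0 < t)%N ->
  eqm K ((1 - 'X^t) * HH K a (c + 2) t)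
        ((1 - 'X^c) + ('X^c + 'X^(a + t)) * HH K a (c + 2) (t + 2)).
Proof.
move=> t0; case: K => [|K]; first exact: eqm0.
set D := fun k => hh K.+1 a (c + 2) k * 'X^(t * k).
have A : forall k, eqm K.+1 (D k.+1 * (1 - 'X^(c + 2 * k.+1)))
                             (D k * 'X^t * (1 + 'X^(a + 2 * k))).
  move=> k; rewrite /D hhSr (_ : (c + 2 * k.+1 = c + 2 + 2 * k)%N); last by lia.
  set g := gi _ _.
  rewrite (_ : forall u v w z : {poly int}, u * (v * g) * w * z = u * v * w * (g * z)); last by move=> *; ring.
  rewrite gi_inv; last by lia.
  apply: eqm_eq; rewrite mulnS (exprD _ t (t * k)); ring.
have B : eqm K.+1 (\sum_(k < K.+1) D k * (1 - 'X^(c + 2 * k)))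
     ((1 - 'X^c) + \sum_(k < K.+1) D k * 'X^t * (1 + 'X^(a + 2 * k))).
  rewrite big_ord_recl /= (_ : D 0%N = 1); last by rewrite /D /hh big_ord0 muln0 expr0 mulr1.
  rewrite mul1r muln0 addn0; apply: eqm_add; first reflexivity.
  rewrite [\sum_(k < K.+1) (D k * 'X^t * _)]big_ord_recr /= -[X in eqm _ X _]addr0.
  apply: eqm_add.
    by apply: eqm_sum => k _; rewrite /= (_ : bump 0 k = k.+1) // A.
  apply: eqm_sym; rewrite /D.
  rewrite (_ : hh K.+1 a (c + 2) K * 'X^(t * K) * 'X^t * (1 + 'X^(a + 2 * K)) =
      'X^(t * K.+1) * (hh K.+1 a (c + 2) K * (1 + 'X^(a + 2 * K)))); last by rewrite mulnS (exprD _ t (t * K)); ring.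
  by apply: eqm_Xn0; nia.
set S1 := \sum_(k < K.+1) D k.
set S2 := \sum_(k < K.+1) D k * 'X^(2 * k).
have E1 : \sum_(k < K.+1) D k * (1 - 'X^(c + 2 * k)) = S1 - 'X^c * S2.
  rewrite /S1 /S2 mulr_sumr -sumrB; apply: eq_bigr => k _; rewrite exprD; ring.
have E2 : \sum_(k < K.+1) D k * 'X^t * (1 + 'X^(a + 2 * k)) = 'X^t * S1 + 'X^(a + t) * S2.
  rewrite /S1 /S2 !mulr_sumr -big_split /=; apply: eq_bigr => k _; rewrite !exprD; ring.
have E3 : HH K.+1 a (c + 2) (t + 2) = S2.
  by rewrite /HH /S2; apply: eq_bigr => k _; rewrite /D mulnDl exprD mulrA.
rewrite E1 E2 in B; rewrite E3 (_ : HH K.+1 a (c + 2) t = S1) //.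
rewrite (_ : (1 - 'X^t) * S1 = (S1 - 'X^c * S2) + ('X^c * S2 - 'X^t * S1)); last by ring.
rewrite B; apply: eqm_eq; ring.
Qed.

Lemma RFstep K a b t : (0 < t)%N -> (0 < b)%N ->
  eqm K ((1 - 'X^b) * (1 - 'X^t) * HH K a b t)
    ((1 + 'X^(a + t)) * (1 - 'X^b) +
     (1 + 'X^a) * ('X^b + 'X^(a + 2 + t)) * 'X^t * HH K (a + 2) (b + 2) (t + 2)).
Proof.
move=> t0 b0; rewrite R1 //.
set H1 := HH K (a + 2) (b + 2) t.
rewrite (_ : (1 - 'X^b) * (1 - 'X^t) * (1 + 'X^t * ((1 + 'X^a) * gi K b) * H1) =
   (1 - 'X^b) * (1 - 'X^t) + 'X^t * (1 + 'X^a) * (gi K b * (1 - 'X^b)) * ((1 - 'X^t) * H1));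
  last by ring.
rewrite gi_inv // R2 //; apply: eqm_eq; rewrite !exprD; ring.
Qed.

Definition Hf K N := HH K (2 * N + 1) (2 * N + 3) (2 * N + 1).

Lemma Hstep K N :
  eqm K ((1 - 'X^(2 * N + 3)) * (1 - 'X^(2 * N + 1)) * Hf K N)
    ((1 + 'X^(4 * N + 2)) * (1 - 'X^(2 * N + 3)) +
     (1 + 'X^(2 * N + 1)) ^+ 2 * 'X^(4 * N + 4) * Hf K N.+1).
Proof.
rewrite /Hf RFstep; [|lia|lia].
rewrite (_ : (2 * N + 1 + 2 = 2 * N.+1 + 1)%N); last by lia.
rewrite (_ : (2 * N + 3 + 2 = 2 * N.+1 + 3)%N); last by lia.
rewrite (_ : (2 * N + 1 + (2 * N + 1) = 4 * N + 2)%N); last by lia.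
rewrite (_ : (2 * N.+1 + 1 + (2 * N + 1) = 4 * N + 4)%N); last by lia.
rewrite (_ : (2 * N + 3 = 2 * N + 1 + 2)%N); last by lia.
apply: eqm_eq; rewrite (_ : (4 * N + 4 = (2 * N + 1 + 2) + (2 * N + 1))%N); last by lia.
rewrite !exprD; ring.
Qed.

Lemma Hinv K N :
  eqm K (Hf K N)
    (gi K (2 * N + 1) * (1 + 'X^(4 * N + 2)) +
     gi K (2 * N + 1) * gi K (2 * N + 3) * (1 + 'X^(2 * N + 1)) ^+ 2 *
       'X^(4 * N + 4) * Hf K N.+1).
Proof.
apply: (@eqm_trans _ _ ((gi K (2 * N + 1) * (1 - 'X^(2 * N + 1))) *
   (gi K (2 * N + 3) * (1 - 'X^(2 * N + 3))) * Hf K N)).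
  by rewrite !gi_inv ?addn1 ?addn3 //; apply: eqm_eq; ring.
rewrite (_ : gi K (2 * N + 1) * (1 - 'X^(2 * N + 1)) *
   (gi K (2 * N + 3) * (1 - 'X^(2 * N + 3))) * Hf K N =
   gi K (2 * N + 1) * gi K (2 * N + 3) *
   ((1 - 'X^(2 * N + 3)) * (1 - 'X^(2 * N + 1)) * Hf K N)); last by ring.
rewrite Hstep.
rewrite (_ : gi K (2 * N + 1) * gi K (2 * N + 3) *
  ((1 + 'X^(4 * N + 2)) * (1 - 'X^(2 * N + 3)) +
     (1 + 'X^(2 * N + 1)) ^+ 2 * 'X^(4 * N + 4) * Hf K N.+1) =
  gi K (2 * N + 1) * (1 + 'X^(4 * N + 2)) * (gi K (2 * N + 3) * (1 - 'X^(2 * N + 3))) +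
  gi K (2 * N + 1) * gi K (2 * N + 3) * (1 + 'X^(2 * N + 1)) ^+ 2 *
       'X^(4 * N + 4) * Hf K N.+1); last by ring.
by rewrite gi_inv ?addn3 // mulr1.
Qed.

Definition Pp n : {poly int} := \prod_(j < n) (1 + 'X^(2 * j + 1)).
Definition Gi K n : {poly int} := \prod_(j < n) gi K (2 * j + 1).
Definition G K n : {poly int} :=
  'X^(2 * n * n.+1) * (1 + 'X^(4 * n + 2)) * (Pp n) ^+ 2 * (Gi K n.+1) ^+ 2.

Lemma Iter K M :
  eqm K (gi K 1 * Hf K 0)
    (\sum_(n < M) G K n + 'X^(2 * M * M.+1) * (Pp M) ^+ 2 * Gi K M * Gi K M.+1 * Hf K M).
Proof.
elim: M => [|M IH].
  by rewrite big_ord0 /Pp /Gi !big_ord0 big_ord1 add0r; apply: eqm_eq; rewrite expr0 /=; ring.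
rewrite IH Hinv big_ord_recr /=.
rewrite (_ : (2 * M + 3 = 2 * M.+1 + 1)%N); last by lia.
apply: eqm_eq.
rewrite /G /Pp /Gi (big_ord_recr M.+1) (big_ord_recr M) /=.
rewrite (_ : (2 * M.+1 * M.+2 = 2 * M * M.+1 + (4 * M + 4))%N); last by lia.
rewrite (exprD _ (2 * M * M.+1) (4 * M + 4)); rewrite [\prod_(j < M.+1) (1 + _)]big_ord_recr /=; ring.
Qed.

Lemma BH K : eqm K (gi K 1 * Hf K 0) (\sum_(n < K) G K n).
Proof.
rewrite (@Iter K K) -[X in eqm _ _ X]addr0; apply: eqm_add; first reflexivity.
rewrite -!mulrA; apply: eqm_Xn0; nia.
Qed.

Definition BP K n : {poly int} := 'X^n * Pp n * Gi K n.+1.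

Lemma BH2 K : gi K 1 * Hf K 0 = \sum_(n < K) BP K n.
Proof.
rewrite /Hf /HH mulr_sumr; apply: eq_bigr => k _.
rewrite /BP /hh /Pp /Gi big_ord_recl /= !muln0 !add0n mul1n big_split /=.
rewrite (_ : \prod_(i < k) gi K (2 * bump 0 i + 1) = \prod_(i < k) gi K (3 + 2 * i)); last first.
  by apply: eq_bigr => i _; rewrite (_ : bump 0 i = i.+1) //; congr gi; lia.
rewrite (_ : \prod_(i < k) (1 + 'X^(1 + 2 * i)) = \prod_(i < k) (1 + 'X^(2 * i + 1)) :> {poly int}); last first.
  by apply: eq_bigr => i _; rewrite addnC.
ring.
Qed.

Definition agr K (f : series) (P : {poly int}) := forall i, (i < K)%N -> f i = P`_i.

Lemma agr_smul K f g P Q : agr K f P -> agr K g Q -> agr K (smul f g) (P * Q).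
Proof.
move=> Hf Hg i Hi; rewrite /smul coefM; apply: eq_bigr => j _.
have hj : (j <= i)%N by rewrite -ltnS.
rewrite Hf ?Hg //; [exact: leq_ltn_trans (leq_subr _ _) Hi | exact: leq_ltn_trans hj Hi].
Qed.

Lemma agr_sone K : agr K sone 1.
Proof. by move=> i _; rewrite /sone coef1 natz. Qed.

Lemma agr_smon K d : agr K (smon d) 'X^d.
Proof. by move=> i _; rewrite /smon coefXn natz. Qed.

Lemma agr_onePlus K d : agr K (onePlus d) (1 + 'X^d).
Proof. by move=> i _; rewrite /onePlus coefD coef1 coefXn !natz. Qed.

Lemma agr_geomInv K d : agr K (geomInv d) (gi K d).
Proof. by move=> i Hi; rewrite /geomInv /gi coef_poly Hi. Qed.

Lemma agr_sprod K (f : nat -> series) (P : nat -> {poly int}) s :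
  (forall j, agr K (f j) (P j)) ->
  agr K (sprod [seq f j | j <- s]) (\prod_(j <- s) P j).
Proof.
move=> H; elim: s => [|j s IH]; first by rewrite big_nil; exact: agr_sone.
by rewrite big_cons /=; apply: agr_smul.
Qed.

Lemma prod_iota (F : nat -> {poly int}) n :
  \prod_(j <- iota 0 n) F j = \prod_(j < n) F j.
Proof. by rewrite -(big_mkord xpredT) /index_iota subn0. Qed.

Lemma agr_Bterm K n : agr K (Bterm n) (BP K n).
Proof.
rewrite /Bterm /BP -mulrA; apply: agr_smul; first exact: agr_smon.
apply: agr_smul.
  rewrite (_ : Pp n = \prod_(j <- iota 0 n) (1 + 'X^((2 * j).+1))); last first.
    by rewrite prod_iota /Pp; apply: eq_bigr => j _; rewrite addn1.
  by apply: agr_sprod => j; exact: agr_onePlus.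
rewrite (_ : Gi K n.+1 = \prod_(j <- iota 0 n.+1) gi K ((2 * j).+1)); last first.
  by rewrite prod_iota /Gi; apply: eq_bigr => j _; rewrite addn1.
by apply: agr_sprod => j; exact: agr_geomInv.
Qed.

Lemma b_G m : b m = (\sum_(n < m.+1) G m.+1 n)`_m.
Proof.
rewrite -(BH (ltnSn m)) BH2 /b coef_sum; apply: eq_bigr => n _.
exact: agr_Bterm.
Qed.

Lemma dvdz_sum (d : int) (I : Type) (r : seq I) (P : pred I) (F : I -> int) :
  (forall i, P i -> (d %| F i)%Z) -> (d %| \sum_(i <- r | P i) F i)%Z.
Proof.
move=> H; elim/big_rec: _ => [|i x Pi Hx]; first exact: dvdz0.
by rewrite rpredD // H.
Qed.

Definition Ev K (f : {poly int}) := forall i, (i < K)%N -> odd i -> (2 %| f`_i)%Z.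
Definition Od K (f : {poly int}) := forall i, (i < K)%N -> ~~ odd i -> (2 %| f`_i)%Z.

Lemma Ev_eqm K f g : eqm K f g -> Ev K f -> Ev K g.
Proof. by move=> E H i Hi Oi; rewrite -E // H. Qed.
Lemma Od_eqm K f g : eqm K f g -> Od K f -> Od K g.
Proof. by move=> E H i Hi Oi; rewrite -E // H. Qed.

Lemma EvM K f g : Ev K f -> Ev K g -> Ev K (f * g).
Proof.
move=> Hf Hg i Hi Oi; rewrite coefM; apply: dvdz_sum => j _.
have hj : (j <= i)%N by rewrite -ltnS ltn_ord.
have hjK : (j < K)%N by exact: leq_ltn_trans hj Hi.
have hiK : (i - j < K)%N by exact: leq_ltn_trans (leq_subr _ _) Hi.
case Oj: (odd j); first by apply: dvdz_mulr; apply: Hf.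
apply: dvdz_mull; apply: Hg => //; by rewrite oddB // Oi Oj.
Qed.

Lemma EvOdM K f g : Ev K f -> Od K g -> Od K (f * g).
Proof.
move=> Hf Hg i Hi Oi; rewrite coefM; apply: dvdz_sum => j _.
have hj : (j <= i)%N by rewrite -ltnS ltn_ord.
have hjK : (j < K)%N by exact: leq_ltn_trans hj Hi.
have hiK : (i - j < K)%N by exact: leq_ltn_trans (leq_subr _ _) Hi.
case Oj: (odd j); first by apply: dvdz_mulr; apply: Hf.
apply: dvdz_mull; apply: Hg => //; rewrite oddB // Oj; by move: Oi; case: (odd i).
Qed.

Lemma OdD K f g : Od K f -> Od K g -> Od K (f + g).
Proof. by move=> Hf Hg i Hi Oi; rewrite coefD rpredD ?Hf ?Hg. Qed.

Lemma Od2 K f : Od K (f *+ 2).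
Proof. by move=> i _ _; rewrite coefMn; apply/dvdzP; exists f`_i; rewrite mulr_natr. Qed.

Lemma EvXn K e : ~~ odd e -> Ev K 'X^e.
Proof.
move=> Oe i _ Oi; rewrite coefXn; case: eqP => [E|_]; last by rewrite dvdz0.
by move: Oe; rewrite -E Oi.
Qed.

Lemma Ev1Xn K e : ~~ odd e -> Ev K (1 + 'X^e).
Proof.
move=> Oe i _ Oi; rewrite coefD coef1 coefXn.
case: eqP => [E|_]; first by move: Oi; rewrite E.
case: eqP => [E|_]; last by rewrite dvdz0.
by move: Oe; rewrite -E Oi.
Qed.

Definition Sq K d : {poly int} := \poly_(i < K) (fS d i)%:Z.

Lemma Sq_gi K d : (0 < d)%N -> eqm K (Sq K d * (1 - 'X^d)) (gi K d).
Proof.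
move=> d0 i Hi; rewrite mulrBr mulr1 coefB coefMXn !coef_poly Hi /fS.
case: ltnP => hid.
  rewrite subr0; case: i Hi hid => [|i] Hi hid; first by rewrite dvdn0 div0n.
  by rewrite gtnNdvd.
rewrite (leq_ltn_trans (leq_subr _ _) Hi) (dvdn_subl hid (dvdnn d)).
case hd: (d %| i)%N; last by rewrite !mul0n subrr.
case/dvdnP: hd hid => k -> hid.
have -> : (k * d - d = (k - 1) * d)%N by rewrite mulnBl mul1n.
rewrite !mulnK //.
case: k hid => [|k] hid; first by move: hid; rewrite mul0n leqNgt d0.
rewrite subn1 /= !mul1n; lia.
Qed.

Lemma Sq_eq K d : (0 < d)%N -> eqm K (gi K d * gi K d) (Sq K d).
Proof.
move=> d0; apply: eqm_sym.
apply: (@eqm_trans _ _ ((Sq K d * (1 - 'X^d)) * gi K d)).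
  rewrite (_ : Sq K d * (1 - 'X^d) * gi K d = Sq K d * (gi K d * (1 - 'X^d))); last by ring.
  by rewrite gi_inv // mulr1.
by rewrite Sq_gi.
Qed.

Lemma Ev_Sq K d : odd d -> Ev K (Sq K d).
Proof.
move=> Od i Hi Oi; rewrite coef_poly Hi /fS.
case hd: (d %| i)%N; last by rewrite mul0n.
case/dvdnP: hd Oi => k ->; rewrite oddM Od andbT => Ok.
have d0 : (0 < d)%N := odd_gt0 Od.
rewrite mulnK // mul1n dvdzE /=; rewrite dvdn2 /=; by rewrite Ok.
Qed.

Lemma Od_XSq K d : odd d -> Od K ('X^d * Sq K d).
Proof.
move=> Od i Hi Oi; rewrite coefXnM; case: ltnP => hid; first exact: dvdz0.
rewrite coef_poly (leq_ltn_trans (leq_subr _ _) Hi) /fS (dvdn_subl hid (dvdnn d)).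
case hd: (d %| i)%N; last by rewrite mul0n.
have d0 : (0 < d)%N := odd_gt0 Od.
case/dvdnP: hd Oi hid => k ->; rewrite oddM Od andbT => Ok hid.
have -> : (k * d - d = (k - 1) * d)%N by rewrite mulnBl mul1n.
rewrite mulnK // mul1n.
case: k Ok hid => [|k] Ok hid; first by move: hid; rewrite mul0n leqNgt d0.
by rewrite subSS subn0 dvdzE /= dvdn2.
Qed.

Add Parametric Morphism K n : (fun p : {poly int} => p *+ n) with signature
  eqm K ==> eqm K as eqm_natmul.
Proof. by move=> p q H i Hi; rewrite !coefMn H. Qed.

Lemma factor K d : odd d ->
  eqm K (((1 + 'X^d) * gi K d) ^+ 2) (1 + ('X^d * Sq K d) *+ 4).
Proof.
move=> Od; have d0 : (0 < d)%N := odd_gt0 Od.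
have E1 : eqm K (gi K d) (1 + 'X^d * gi K d).
  apply: (@eqm_trans _ _ (gi K d * (1 - 'X^d) + 'X^d * gi K d)).
    by apply: eqm_eq; ring.
  by rewrite gi_inv.
set y := 'X^d * gi K d.
rewrite (_ : (1 + 'X^d) * gi K d = gi K d + y); last by rewrite /y; ring.
rewrite expr2; apply: (@eqm_trans _ _ ((1 + y + y) * (1 + y + y))).
  by apply: eqm_mul; apply: eqm_add; (exact: E1 || reflexivity).
apply: (@eqm_trans _ _ (1 + (y * (1 + y)) *+ 4)); first by apply: eqm_eq; ring.
apply: eqm_add; first reflexivity.
apply: eqm_natmul.
apply: (@eqm_trans _ _ (y * gi K d)).
  by apply: eqm_mul; [reflexivity | apply: eqm_sym].
rewrite /y -mulrA; apply: eqm_mul; first reflexivity.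
exact: Sq_eq.
Qed.

Lemma Pform K n : exists Z, Od K Z /\ eqm K ((Pp n) ^+ 2 * (Gi K n) ^+ 2) (1 + Z *+ 4).
Proof.
elim: n => [|n [Z [HZ IH]]].
  exists 0; split; first by move=> i _ _; rewrite coef0 dvdz0.
  by rewrite /Pp /Gi !big_ord0; apply: eqm_eq; rewrite mul0rn; ring.
exists (Z + 'X^(2 * n + 1) * Sq K (2 * n + 1) + (Z * ('X^(2 * n + 1) * Sq K (2 * n + 1))) *+ 4).
split.
  apply: OdD; first apply: OdD => //.
    by apply: Od_XSq; rewrite addn1 /= oddM.
  by rewrite (_ : 4%N = (2 * 2)%N) // mulrnA; apply: Od2.
rewrite /Pp /Gi !big_ord_recr /= -/(Pp n) -/(Gi K n).
rewrite (_ : (Pp n * (1 + 'X^(2 * n + 1))) ^+ 2 * (Gi K n * gi K (2 * n + 1)) ^+ 2 =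
   (Pp n ^+ 2 * Gi K n ^+ 2) * ((1 + 'X^(2 * n + 1)) * gi K (2 * n + 1)) ^+ 2); last by ring.
rewrite IH factor; last by rewrite addn1 /= oddM.
apply: eqm_eq; ring.
Qed.

Lemma coefXSq K a d j : (j < K)%N ->
  ('X^a * Sq K d)`_j = (if (j < a)%N then 0%N else fS d (j - a))%:Z.
Proof.
move=> Hj; rewrite coefXnM; case: ltnP => // h.
by rewrite coef_poly (leq_ltn_trans (leq_subr _ _) Hj).
Qed.

Lemma Gcoef K n m : (4 * m < K)%N ->
  exists w : int, (G K n)`_(4 * m) = ((4 * m == 2 * n * n.+1)%N : nat)%:Z + 8 * w.
Proof.
move=> HK.
set d := (2 * n + 1)%N; set e := (2 * n * n.+1)%N.
have Od' : odd d by rewrite /d addn1 /= oddM.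
have d0 : (0 < d)%N := odd_gt0 Od'.
case: (Pform K n) => Z [HZ EZ].
have E : eqm K (G K n) ('X^e * (1 + 'X^(2 * d)) * Sq K d +
                        ('X^e * (1 + 'X^(2 * d)) * Sq K d * Z) *+ 4).
  rewrite /G /Gi big_ord_recr /= -/(Gi K n) -/d -/e.
  rewrite (_ : (4 * n + 2 = 2 * d)%N); last by rewrite /d; lia.
  rewrite (_ : 'X^e * (1 + 'X^(2 * d)) * Pp n ^+ 2 * (Gi K n * gi K d) ^+ 2 =
     'X^e * (1 + 'X^(2 * d)) * (Pp n ^+ 2 * Gi K n ^+ 2) * (gi K d * gi K d)); last by ring.
  apply: (@eqm_trans _ _ ('X^e * (1 + 'X^(2 * d)) * (1 + Z *+ 4) * Sq K d)).
    apply: eqm_mul; last exact: Sq_eq.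
    by apply: eqm_mul; [reflexivity | exact: EZ].
  by apply: eqm_eq; ring.
have Hc2 : (2 %| ('X^e * (1 + 'X^(2 * d)) * Sq K d * Z)`_(4 * m))%Z.
  apply: (EvOdM _ HZ) => //; last by rewrite oddM.
  apply: EvM; last exact: Ev_Sq.
  apply: EvM; first by apply: EvXn; rewrite /e -mulnA oddM.
  by apply: Ev1Xn; rewrite oddM.
case/dvdzP: Hc2 => t Ht.
case: (arith n m) => w Hw.
exists (w%:Z + t).
rewrite E // coefD coefMn Ht.
rewrite (_ : 'X^e * (1 + 'X^(2 * d)) * Sq K d = 'X^e * Sq K d + 'X^(e + 2 * d) * Sq K d);
  last by rewrite exprD; ring.
rewrite coefD !coefXSq // -PoszD -/d -/e.
rewrite (_ : (4 * m - (e + 2 * d) = 4 * m - e - 2 * d)%N); last by rewrite subnDA.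
rewrite Hw PoszD PoszM; ring.
Qed.

Definition tri m := [exists n : 'I_(4 * m).+1, (4 * m == 2 * n * n.+1)%N].

Lemma sum_tri m :
  \sum_(n < (4 * m).+1) (((4 * m == 2 * n * n.+1)%N : nat)%:Z) = ((tri m : nat)%:Z).
Proof.
case: (boolP (tri m)) => [/existsP [n0 /eqP H0] | Hn].
  rewrite (bigD1 n0) //= -H0 eqxx big1 ?addr0 // => i /eqP Hi.
  case: eqP => // Hi'; exfalso; apply: Hi; apply: val_inj => /=.
  have Hii : (2 * n0 * n0.+1 = 2 * i * i.+1)%N by rewrite -H0.
  case: (ltngtP n0 i) => // h; exfalso; nia.
rewrite big1 // => i _; case: eqP => // Hi; exfalso.
by move/existsP: Hn; apply; exists i; apply/eqP.
Qed.

Lemma bmod8 m : (b (4 * m) = ((tri m : nat)%:Z) %[mod 8])%Z.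
Proof.
apply/eqP; rewrite eqz_mod_dvd b_G coef_sum -sum_tri -sumrB.
apply: rpred_sum => n _.
case: (@Gcoef (4 * m).+1 n m (ltnSn _)) => w ->.
by rewrite addrC addKr dvdz_mulr.
Qed.

Lemma tri_sq m : tri m <-> exists s, (s * s = 8 * m + 1)%N.
Proof.
split.
  by case/existsP => n /eqP H; exists (2 * n + 1)%N; nia.
case=> s Hs.
have Os : odd s.
  have : odd (s * s) by rewrite Hs addn1 /= oddM.
  by rewrite oddM andbb.
have Es : s = (2 * s./2 + 1)%N by rewrite -{1}(odd_double_half s) Os addnC -muln2 mulnC addn1.
set n := s./2 in Es.
have Hn : (4 * m = 2 * n * n.+1)%N by rewrite Es in Hs; nia.
have Hlt : (n < (4 * m).+1)%N by rewrite ltnS Hn; nia.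
by apply/existsP; exists (Ordinal Hlt); apply/eqP.
Qed.

Lemma tri_scale n P : (0 < P)%N -> odd P ->
  ((P * P - 1) %/ 8 * 8 = P * P - 1)%N /\
  (tri n <-> tri (P * P * n + (P * P - 1) %/ 8)%N).
Proof.
move=> P0 OP.
have E8 : ((P * P - 1) %/ 8 * 8 = P * P - 1)%N.
  apply/eqP; rewrite -dvdn_eq.
  have EP : P = (2 * P./2 + 1)%N by rewrite -{1}(odd_double_half P) OP addnC -muln2 mulnC addn1.
  set a := P./2 in EP.
  have h2 : (2 %| a * a.+1)%N by rewrite dvdn2 oddM /=; case: (odd a).
  case/dvdnP: h2 => c Hc.
  apply/dvdnP; exists c; rewrite EP; nia.
split => //.
rewrite !tri_sq.
have EM : (8 * (P * P * n + (P * P - 1) %/ 8) + 1 = P * P * (8 * n + 1))%N.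
  move: E8; set c := ((P * P - 1) %/ 8)%N => E8.
  have : (0 < P * P)%N by rewrite muln_gt0 P0.
  nia.
rewrite EM; split.
  by case=> s Hs; exists (P * s)%N; rewrite -Hs; ring.
case=> t Ht.
have : (P ^ 2 %| t ^ 2)%N by rewrite !expnS !expn0 !muln1 Ht dvdn_mulr.
rewrite dvdn_pexp2r // => /dvdnP [u Hu].
exists u; apply/eqP; rewrite -(eqn_pmul2l (_ : 0 < P * P)%N); last by rewrite muln_gt0 P0.
by rewrite -Ht Hu; apply/eqP; ring.
Qed.

Unset Implicit Arguments.
Theorem theorem1p7 (p : nat) (hp : prime p) (hodd : odd p) :
  (forall l : nat, (1 <= l)%N -> (l <= p - 1)%N ->
     legendre (8 * l + 1)%N%:Z p = -1 ->
     forall n : nat, (b (4 * (p * n + l)) = 0 %[mod 8])%Z)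
  /\
  (forall n k : nat,
     (b (4 * n) = b (4 * p ^ (2 * k + 2) * n + (p ^ (2 * k + 2) - 1) %/ 2)
        %[mod 8])%Z).
Proof.
have p0 : (0 < p)%N := prime_gt0 hp.
split.
  move=> l hl1 hl2 hleg n; rewrite bmod8.
  case: (boolP (tri (p * n + l))) => [Ht|]; last by [].
  exfalso; case/tri_sq: Ht => s Hs.
  move: hleg; rewrite /legendre.
  case: ifP => _; first by [].
  have -> : [exists x : 'I_p, (p%:Z %| (x%:Z ^+ 2 - (8 * l + 1)%N%:Z))%Z].
    apply/existsP; exists (Ordinal (ltn_pmod s p0)) => /=.
    rewrite -eqz_mod_dvd -!natz -natrX !natz !modz_nat; apply/eqP; congr Posz.
    by rewrite modnXm expnS expn1 Hs (_ : (8 * (p * n + l) + 1 = (8 * n) * p + (8 * l + 1))%N)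
      ?modnMDl //; lia.
  by [].
move=> n k.
set P := (p ^ k.+1)%N.
have P0 : (0 < P)%N by rewrite expn_gt0 p0.
have OP : odd P by rewrite oddX hodd orbT.
case: (@tri_scale n P P0 OP) => E8 Htri.
have -> : (4 * p ^ (2 * k + 2) * n + (p ^ (2 * k + 2) - 1) %/ 2 =
           4 * (P * P * n + (P * P - 1) %/ 8))%N.
  have -> : (p ^ (2 * k + 2) = P * P)%N by rewrite /P -expnD; congr expn; lia.
  move: E8; set c := ((P * P - 1) %/ 8)%N => E8.
  rewrite -E8 (_ : (c * 8 = (c * 4) * 2)%N); last by lia.
  rewrite mulnK //; lia.
rewrite !bmod8.
have -> : tri (P * P * n + (P * P - 1) %/ 8) = tri n.
  by apply/idP/idP => H; apply/Htri.
by [].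
Qed.
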